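(* Let $S_{r,N}$ be a nontrivial atomic exponential Puiseux semiring with $r>1$. Let $x\in S_{r,N}$ and $k\in\mathbb{N}$ be such that $r^{s_k}$ divides $x$ in $S_{r,N}$. Then for every factorization $z=\sum_{i=0}^{n}c_ir^{s_i}\in\mathsf{Z}(x)$ (with $c_0,\dots,c_n\in\mathbb{N}$), either $r^{s_k}$ divides $\sum_{i=0}^{k}c_ir^{s_i}$ in $S_{r,N}$ or $r^{s_k}$ divides $\sum_{i=k+1}^{n}c_ir^{s_i}$ in $S_{r,N}$.
   Context: $\mathbb{N}=\{0,1,2,\dots\}$. A numerical monoid $N$ is an additive submonoid of $\mathbb{N}$ with finite complement in $\mathbb{N}$; let $s_0<s_1<\cdots$ be its elements. For $r\in\mathbb{Q}_{>0}$ write $r=\mathsf{n}(r)/\mathsf{d}(r)$ in lowest terms. The exponential Puiseux semiring $S_{r,N}$ is the additive submonoid of $\mathbb{Q}_{\ge0}$ generated by $\{r^k:k\in N\}$; nontrivial means $r\notin\mathbb{N}$, and then it is atomic iff $\mathsf{n}(r)>1$, with atoms $r^s$, $s\in N$. In a monoid $M$, $y$ divides $w$ (written $y\mid_M w$) if $w=y+y'$ for some $y'\in M$. $\mathsf{Z}(x)$ denotes the set of factorizations of $x$ into atoms. *)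

(* Defs.v *)
From mathcomp Require Import all_boot all_order all_algebra.
Set Implicit Arguments. Unset Strict Implicit. Unset Printing Implicit Defensive.
Import Order.TTheory GRing.Theory Num.Theory.
Local Open Scope ring_scope.

Definition numerical_monoid (N : pred nat) : Prop :=
  [/\ N 0%N,
      (forall a b, N a -> N b -> N (a + b)%N) &
      exists b, forall m, (b <= m)%N -> N m].

Definition enumerates (N : pred nat) (s : nat -> nat) : Prop :=
  (forall i j, (i < j)%N -> (s i < s j)%N) /\ (forall m, N m <-> exists k, s k = m).

Inductive inS (r : rat) (N : pred nat) : rat -> Prop :=
  | inS0 : inS r N 0
  | inS_gen k : N k -> inS r N (r ^+ k)
  | inS_add x y : inS r N x -> inS r N y -> inS r N (x + y).

Definition dvdS (r : rat) (N : pred nat) (y w : rat) : Prop :=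
  exists y', inS r N y' /\ w = y + y'.

(* Main.v *)
Require Import Defs.
From mathcomp Require Import all_boot all_order all_algebra.
From mathcomp Require Import ring lra zify.
Import Order.TTheory GRing.Theory Num.Theory.
Local Open Scope ring_scope.

Definition Lo (r : rat) (K : nat) (A : rat) :=
  exists z : int, A * (denq r)%:~R ^+ K = z%:~R.
Definition Hi (r : rat) (K : nat) (A : rat) :=
  exists (M : nat) (w : int), A * (denq r)%:~R ^+ M = ((numq r) ^+ K.+1 * w)%:~R.

Lemma rE (r : rat) : r = (numq r)%:~R / (denq r)%:~R.
Proof. by rewrite divq_num_den. Qed.

Lemma Q_neq0 (r : rat) : ((denq r)%:~R : rat) != 0.
Proof. by rewrite intr_eq0 denq_neq0. Qed.

Lemma Lo0 r K : Lo r K 0.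
Proof. by exists 0; rewrite mul0r. Qed.
Lemma LoD r K a b : Lo r K a -> Lo r K b -> Lo r K (a + b).
Proof. by move=> [z1 h1] [z2 h2]; exists (z1 + z2); rewrite mulrDl h1 h2 rmorphD. Qed.
Lemma LoN r K a : Lo r K a -> Lo r K (- a).
Proof. by move=> [z1 h1]; exists (- z1); rewrite mulNr h1 rmorphN. Qed.
Lemma LoM r K a (c : nat) : Lo r K a -> Lo r K (c%:R * a).
Proof.
move=> [z1 h1]; exists (c%:Z * z1); rewrite -mulrA h1 rmorphM /=.
by rewrite -[c%:R]/((c%:Z)%:~R).
Qed.
Lemma Lo_atom r K a : (a <= K)%N -> Lo r K (r ^+ a).
Proof.
move=> h; exists (numq r ^+ a * denq r ^+ (K - a)).
rewrite -(subnKC h)  exprD mulrA {1}(rE r) expr_div_n divfK; last first.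
  by rewrite expf_neq0 // Q_neq0.
by rewrite rmorphM /= !rmorphXn /= addKn.
Qed.

Lemma Hi0 r K : Hi r K 0.
Proof. by exists 0%N, 0; rewrite mul0r mulr0. Qed.
Lemma HiD r K a b : Hi r K a -> Hi r K b -> Hi r K (a + b).
Proof.
move=> [M1 [w1 h1]] [M2 [w2 h2]]; exists (M1 + M2)%N, (w1 * denq r ^+ M2 + w2 * denq r ^+ M1).
have e1 : a * (denq r)%:~R ^+ (M1 + M2) = (numq r ^+ K.+1 * w1)%:~R * (denq r)%:~R ^+ M2.
  by rewrite exprD mulrA h1.
have e2 : b * (denq r)%:~R ^+ (M1 + M2) = (numq r ^+ K.+1 * w2)%:~R * (denq r)%:~R ^+ M1.
  by rewrite addnC exprD mulrA h2.
rewrite mulrDl e1 e2.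
rewrite !rmorphM !rmorphD !rmorphM /= !rmorphXn /=; ring.
Qed.
Lemma HiN r K a : Hi r K a -> Hi r K (- a).
Proof. by move=> [M [w h]]; exists M, (- w); rewrite mulNr h mulrN rmorphN. Qed.
Lemma HiM r K a (c : nat) : Hi r K a -> Hi r K (c%:R * a).
Proof.
move=> [M [w h]]; exists M, (c%:Z * w); rewrite -mulrA h !rmorphM /=.
rewrite -[c%:R]/((c%:Z)%:~R); ring.
Qed.
Lemma Hi_atom r K a : (K < a)%N -> Hi r K (r ^+ a).
Proof.
move=> h; exists a, (numq r ^+ (a - K.+1)).
rewrite {1}(rE r) expr_div_n divfK; last by rewrite expf_neq0 // Q_neq0.
by rewrite -exprD subnKC // rmorphXn.
Qed.

Lemma key r K A : Lo r K A -> Hi r K A ->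
  exists g : int, A = (numq r * g)%:~R * r ^+ K.
Proof.
move=> [z hz] [M [w hw]].
have eq : z * denq r ^+ M = numq r ^+ K.+1 * w * denq r ^+ K.
  apply: (@intr_inj rat); rewrite [LHS]rmorphM [RHS]rmorphM /= -hz -hw !rmorphXn /=; ring.
have cop : coprimez (numq r ^+ K.+1) (denq r ^+ M).
  by apply: coprimezXl; apply: coprimezXr; rewrite coprimezE coprime_num_den.
have dv : (numq r ^+ K.+1 %| z)%Z.
  by rewrite -(Gauss_dvdzl _ cop) eq -mulrA dvdz_mulr.
exists (z %/ numq r ^+ K.+1)%Z.
have Qn := Q_neq0 r.
set g := (z %/ _)%Z.
apply: (mulIf (expf_neq0 K Qn)); rewrite hz -(divzK dv) -/g.
rewrite [in r ^+ K](rE r) expr_div_n !rmorphM /= !rmorphXn /= exprS.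
field; exact: expf_neq0.
Qed.

Lemma inS_seq (N : pred nat) (s : nat -> nat) (r : rat)
  (hNs : forall m, N m <-> exists k, s k = m) y :
  inS r N y -> exists l : seq nat, y = \sum_(j <- l) r ^+ s j.
Proof.
elim=> [|m Nm|a b _ [l1 e1] _ [l2 e2]].
- by exists [::]; rewrite big_nil.
- have [j ej] := (hNs m).1 Nm.
  by exists [:: j]; rewrite big_seq1 ej.
- by exists (l1 ++ l2); rewrite big_cat /= e1 e2.
Qed.

Lemma natmul_inS (N : pred nat) (r : rat) a (c : nat) :
  N a -> inS r N (c%:R * r ^+ a).
Proof.
move=> Na; elim: c => [|c IH]; first by rewrite mul0r; exact: inS0.
by rewrite mulrS mulrDl mul1r; apply: inS_add => //; exact: inS_gen.
Qed.

Lemma int_inS (N : pred nat) (r : rat) a (m : int) :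
  N a -> 0 <= m -> inS r N (m%:~R * r ^+ a).
Proof.
by case: m => // c Na _; exact: natmul_inS.
Qed.

Lemma sum_inS (N : pred nat) (s : nat -> nat) (r : rat)
  (Ns : forall i, N (s i)) (l : seq nat) (P : pred nat) :
  inS r N (\sum_(j <- l | P j) r ^+ s j).
Proof.
apply: (big_ind (inS r N)); [exact: inS0 | exact: inS_add | move=> i _; exact: inS_gen].
Qed.

Theorem mainTheorem13 (N : pred nat) (s : nat -> nat) (r : rat)
  (hN : numerical_monoid N) (hs : enumerates N s)
  (hr1 : 1 < r) (hnontriv : denq r != 1) (hatomic : (1 < numq r)%R)
  (x : rat) (k : nat)
  (hx : inS r N x) (hdiv : dvdS r N (r ^+ s k) x)
  (n : nat) (c : nat -> nat)
  (hz : x = \sum_(i < n.+1) (c i)%:R * r ^+ s i) :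
  dvdS r N (r ^+ s k) (\sum_(i < n.+1 | (i <= k)%N) (c i)%:R * r ^+ s i) \/
  dvdS r N (r ^+ s k) (\sum_(i < n.+1 | (k < i)%N) (c i)%:R * r ^+ s i).
Proof.
move: hs => [hmono hNs].
have Ns : forall i, N (s i) by move=> i; apply/(hNs (s i)).2; exists i.
have hsle : forall i j, (i <= j)%N -> (s i <= s j)%N.
  move=> i j; rewrite leq_eqVlt => /orP [/eqP -> //|/hmono]; exact: ltnW.
case: hdiv => y [hy hxy].
have [l hl] := @inS_seq N s r hNs y hy.
set K := s k.
set L := \sum_(i < n.+1 | (i <= k)%N) (c i)%:R * r ^+ s i.
set H := \sum_(i < n.+1 | (k < i)%N) (c i)%:R * r ^+ s i.
set Yl := \sum_(j <- l | (j <= k)%N) r ^+ s j.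
set Yh := \sum_(j <- l | (k < j)%N) r ^+ s j.
have hxLH : x = L + H.
  rewrite hz (bigID (fun i : 'I_n.+1 => (i <= k)%N)) /=; congr (_ + _).
  by apply: eq_bigl => i; rewrite ltnNge.
have hyY : y = Yl + Yh.
  rewrite hl (bigID (fun j => (j <= k)%N)) /=; congr (_ + _).
  by apply: eq_bigl => i; rewrite ltnNge.
have loA : Lo r K (L - r ^+ K - Yl).
  apply: LoD; first apply: LoD.
  - apply: (big_ind (Lo r K)); [exact: Lo0 | exact: LoD | move=> i hi].
    by apply: LoM; apply: Lo_atom; apply: hsle.
  - by apply: LoN; apply: Lo_atom.
  - apply: LoN; apply: (big_ind (Lo r K)); [exact: Lo0 | exact: LoD | move=> i hi].
    by apply: Lo_atom; apply: hsle.
have eqA : L - r ^+ K - Yl = Yh - H.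
  have : L + H = r ^+ K + (Yl + Yh) by rewrite -hxLH -hyY.
  move=> e; have -> : L = r ^+ K + (Yl + Yh) - H by rewrite -e addrK.
  ring.
have hiA : Hi r K (L - r ^+ K - Yl).
  rewrite eqA; apply: HiD.
  - apply: (big_ind (Hi r K)); [exact: Hi0 | exact: HiD | move=> i hi].
    by apply: Hi_atom; apply: hmono.
  - apply: HiN; apply: (big_ind (Hi r K)); [exact: Hi0 | exact: HiD | move=> i hi].
    by apply: HiM; apply: Hi_atom; apply: hmono.
have [g eg] := @key r K _ loA hiA.
have p0 : 0 <= numq r by apply: ltW; apply: lt_trans hatomic.
case: (leP 0 g) => g0.
- left; exists (Yl + (numq r * g)%:~R * r ^+ K); split.
    apply: inS_add; first exact: sum_inS.
    by apply: int_inS; [exact: Ns | nia].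
  by rewrite -eg; ring.
- right; exists (Yh + (numq r * - g - 1)%:~R * r ^+ K); split.
    apply: inS_add; first exact: sum_inS.
    by apply: int_inS; [exact: Ns | nia].
  have eH : H = Yh - (L - r ^+ K - Yl) by rewrite eqA; ring.
  by rewrite eH eg !rmorphB !rmorphM rmorphN /=; ring.
Qed.
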